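(* Let $X$ be a countably infinite set and $W=\mathbb R^X$. Then (1) the relation $\blacktriangleright$ on $W$ is a preorder satisfying Strong Pareto, Permutation Invariance, and Quasi-Independence; and (2) $\blacktriangleright$ weakly extends $\succeq_{SP}$ and is strictly larger than it: there exist $w,v\in W$ with $w\blacktriangleright v$ but not $w\succeq_{SP} v$.
   Context: Addition and scalar multiplication of worlds are pointwise. For a preorder $\succeq$, $w\succ v$ means $w\succeq v$ and not $v\succeq w$. For a permutation $\pi$ of $X$, $\pi(w)(x)=w(\pi(x))$. Strong Pareto: for all $w,v\in W$, if $w(x)\ge v(x)$ for all $x$ and $w(x)>v(x)$ for some $x$, then $w\succ v$. Permutation Invariance: for all $w,v\in W$ and every permutation $\pi$ of $X$, $w\succeq v$ iff $\pi(w)\succeq\pi(v)$. Quasi-Independence: for all $w,v,u\in W$, if $w\succeq v$ then for every $\alpha\in[0,1]$, $\alpha w+(1-\alpha)u\succeq \alpha v+(1-\alpha)u$. A series $\sum_{x\in X}a_x$ converges unconditionally (diverges unconditionally to $+\infty$) if it converges to the same value (diverges to $+\infty$) under every enumeration of $X$. Sum Preorder: $w\succeq_{SP} v$ iff $\sum_{x\in X}(w(x)-v(x))$ converges unconditionally to some $r\ge 0$ or diverges unconditionally to $+\infty$. Relation $\blacktriangleright$: $w\blacktriangleright v$ iff either (i) $w\succeq_{SP} v$, or (ii) all of: (a) not $w\succeq_{SP} v$; (b) there exist $c>0$ and an infinite $A\subseteq X$ with $w(x)-v(x)>c$ for all $x\in A$; (c) there do not exist $d>0$ and an infinite $B\subseteq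 X$ with $v(x)-w(x)>d$ for all $x\in B$. A relation $\succeq$ weakly extends $\succeq'$ if $w\succeq' v$ implies $w\succeq v$. *)

(* Defs.v *)
From Stdlib Require Import Reals List.
Open Scope R_scope.

Definition world (X : Type) := X -> R.

Definition bijection {A B : Type} (f : A -> B) : Prop :=
  exists g : B -> A, (forall a, g (f a) = a) /\ (forall b, f (g b) = b).

Definition enumeration {X : Type} (e : nat -> X) : Prop := bijection e.

Definition countably_infinite (X : Type) : Prop := exists e : nat -> X, enumeration e.

Definition psum {X : Type} (a : X -> R) (e : nat -> X) (n : nat) : R :=
  sum_f_R0 (fun k => a (e k)) n.

Definition uncond_conv {X : Type} (a : X -> R) (r : R) : Prop :=
  forall e : nat -> X, enumeration e -> Un_cv (psum a e) r.

Definition uncond_div_pinfty {X : Type} (a : X -> R) : Prop :=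
  forall e : nat -> X, enumeration e -> cv_infty (psum a e).

Definition sum_preorder {X : Type} (w v : world X) : Prop :=
  (exists r, r >= 0 /\ uncond_conv (fun x => w x - v x) r)
  \/ uncond_div_pinfty (fun x => w x - v x).

Definition infinite_set {X : Type} (A : X -> Prop) : Prop :=
  ~ exists l : list X, forall x, A x -> In x l.

Definition btri {X : Type} (w v : world X) : Prop :=
  sum_preorder w v \/
  ( ~ sum_preorder w v /\
    (exists c, c > 0 /\ exists A : X -> Prop,
        infinite_set A /\ forall x, A x -> w x - v x > c) /\
    ~ (exists d, d > 0 /\ exists B : X -> Prop,
        infinite_set B /\ forall x, B x -> v x - w x > d) ).

Definition strict {X : Type} (Rel : world X -> world X -> Prop) (w v : world X) : Prop :=
  Rel w v /\ ~ Rel v w.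

Definition is_preorder {X : Type} (Rel : world X -> world X -> Prop) : Prop :=
  (forall w, Rel w w) /\ (forall w v u, Rel w v -> Rel v u -> Rel w u).

Definition strong_pareto {X : Type} (Rel : world X -> world X -> Prop) : Prop :=
  forall w v : world X,
    (forall x, w x >= v x) -> (exists x, w x > v x) -> strict Rel w v.

Definition permute {X : Type} (pi : X -> X) (w : world X) : world X :=
  fun x => w (pi x).

Definition permutation_invariance {X : Type} (Rel : world X -> world X -> Prop) : Prop :=
  forall (w v : world X) (pi : X -> X), bijection pi ->
    (Rel w v <-> Rel (permute pi w) (permute pi v)).

Definition mix {X : Type} (alpha : R) (w u : world X) : world X :=
  fun x => alpha * w x + (1 - alpha) * u x.

Definition quasi_independence {X : Type} (Rel : world X -> world X -> Prop) : Prop :=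
  forall w v u : world X, Rel w v ->
    forall alpha, 0 <= alpha <= 1 -> Rel (mix alpha w u) (mix alpha v u).

Definition weakly_extends {X : Type} (Rel Rel' : world X -> world X -> Prop) : Prop :=
  forall w v, Rel' w v -> Rel w v.

(* Main.v *)
Require Import Defs.
From Stdlib Require Import Reals List Lra Lia.
From Stdlib Require Import Classical ClassicalEpsilon FunctionalExtensionality.
Open Scope R_scope.

Definition SPr {X : Type} (D : X -> R) : Prop :=
  (exists r, r >= 0 /\ uncond_conv D r) \/ uncond_div_pinfty D.
Definition PosC {X : Type} (D : X -> R) : Prop :=
  exists c, c > 0 /\ exists A : X -> Prop, infinite_set A /\ forall x, A x -> D x > c.
Definition NegS {X : Type} (D : X -> R) : Prop :=
  ~ (exists d, d > 0 /\ exists B : X -> Prop, infinite_set B /\ forall x, B x -> - D x > d).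
Definition bt {X : Type} (D : X -> R) : Prop := SPr D \/ (~ SPr D /\ PosC D /\ NegS D).

Lemma btri_bt {X : Type} (w v : world X) : btri w v <-> bt (fun x => w x - v x).
Proof.
  unfold btri, bt, NegS. split; intros [H|[H1 [H2 H3]]]; [left; exact H| |left; exact H|];
  right; repeat split; auto; intros [d [Hd [B [HB HB2]]]]; apply H3; exists d; split; auto;
  exists B; split; auto; intros x Hx; specialize (HB2 x Hx); lra.
Qed.

Lemma bij_inv {A B : Type} (f : A -> B) : bijection f ->
  exists g, bijection g /\ (forall a, g (f a) = a) /\ (forall b, f (g b) = b).
Proof. intros [g [H1 H2]]. exists g. split; [exists f; split; auto | auto]. Qed.

Lemma bij_comp {A B C : Type} (f : A -> B) (h : B -> C) :
  bijection f -> bijection h -> bijection (fun a => h (f a)).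
Proof.
  intros [g [H1 H2]] [k [K1 K2]]. exists (fun c => g (k c)). split; intros.
  - rewrite K1, H1; auto.
  - rewrite H2, K2; auto.
Qed.

Lemma inj_surj_bij {A B : Type} (f : A -> B) :
  (forall a1 a2, f a1 = f a2 -> a1 = a2) -> (forall b, exists a, f a = b) -> bijection f.
Proof.
  intros Hi Hs. exists (fun b => proj1_sig (constructive_indefinite_description _ (Hs b))).
  split; intros.
  - destruct (constructive_indefinite_description _ (Hs (f a))) as [a' Ha']; simpl. auto.
  - destruct (constructive_indefinite_description _ (Hs b)) as [a' Ha']; simpl. auto.
Qed.

Lemma inf_pre {X : Type} (h : X -> X) (A : X -> Prop) : bijection h ->
  infinite_set A -> infinite_set (fun x => A (h x)).
Proof.
  intros [g [H1 H2]] HA [l Hl]. apply HA. exists (map h l). intros x Hx.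
  rewrite <- (H2 x). apply in_map. apply Hl. rewrite H2. auto.
Qed.

Lemma sum_scal (f : nat -> R) (c : R) n : sum_f_R0 (fun k => c * f k) n = c * sum_f_R0 f n.
Proof. induction n; simpl; [ring| rewrite IHn; ring]. Qed.

Lemma sum_zero n : sum_f_R0 (fun _ => 0) n = 0.
Proof. induction n; simpl; [ring | rewrite IHn; ring]. Qed.

Lemma cv_scal u l c : Un_cv u l -> Un_cv (fun n => c * u n) (c * l).
Proof.
  intros H. apply (CV_mult (fun _ => c) u c l); auto.
  intros eps He. exists 0%nat. intros. unfold Rdist. rewrite Rminus_diag, Rabs_R0. lra.
Qed.

Lemma infty_scal u c : c > 0 -> cv_infty u -> cv_infty (fun n => c * u n).
Proof.
  intros Hc H M. destruct (H (M / c)) as [N HN]. exists N. intros n Hn.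
  specialize (HN n Hn). apply (Rmult_lt_compat_l c) in HN; auto.
  replace (c * (M / c)) with M in HN by (field; lra). auto.
Qed.

Lemma psum_scal {X : Type} (D : X -> R) c e n :
  psum (fun x => c * D x) e n = c * psum D e n.
Proof. unfold psum. apply sum_scal. Qed.

Lemma SP_scal {X : Type} (D : X -> R) c : c > 0 -> SPr D -> SPr (fun x => c * D x).
Proof.
  intros Hc [[r [Hr H]]|H].
  - left. exists (c * r). split. { apply Rle_ge, Rmult_le_pos; lra. }
    intros e He. apply (Un_cv_ext (fun n => c * psum D e n)).
    { intros n. rewrite psum_scal. auto. }
    apply cv_scal; auto.
  - right. intros e He M. destruct (infty_scal _ c Hc (H e He) M) as [N HN].
    exists N. intros n Hn. rewrite psum_scal. auto.
Qed.

Lemma SP_ext {X : Type} (D D' : X -> R) : (forall x, D x = D' x) -> SPr D -> SPr D'.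
Proof. intros H. replace D' with D; auto. apply functional_extensionality; auto. Qed.

Lemma SP_unscal {X : Type} (D : X -> R) c : c > 0 -> SPr (fun x => c * D x) -> SPr D.
Proof.
  intros Hc H. apply (SP_scal _ (/ c)) in H. 2: apply Rlt_gt, Rinv_0_lt_compat; lra.
  revert H. apply SP_ext. intros x. field. lra.
Qed.

Lemma cv_bounded u l : Un_cv u l -> exists M, forall n, u n <= M.
Proof.
  intros H. destruct (H 1 ltac:(lra)) as [N HN].
  assert (exists M, forall n, (n <= N)%nat -> u n <= M) as [M HM].
  { clear HN. induction N. exists (u 0%nat). intros n Hn. replace n with 0%nat by lia. lra.
    destruct IHN as [M HM].
    exists (Rmax M (u (S N))). intros n Hn. destruct (Nat.eq_dec n (S N)).
    subst; apply Rmax_r. eapply Rle_trans; [apply HM; lia| apply Rmax_l]. }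
  exists (Rmax M (l + 1)). intros n. destruct (Compare_dec.le_lt_dec n N).
  - eapply Rle_trans; [apply HM; lia| apply Rmax_l].
  - specialize (HN n ltac:(lia)). unfold Rdist in HN. apply Rabs_def2 in HN.
    eapply Rle_trans; [|apply Rmax_r]. lra.
Qed.

Lemma cv_bounded_below u l : Un_cv u l -> exists M, forall n, M <= u n.
Proof.
  intros H. destruct (cv_bounded (fun n => - u n) (- l)) as [M HM].
  { intros eps He. destruct (H eps He) as [N HN]. exists N. intros n Hn.
    unfold Rdist in *. replace (- u n - - l) with (- (u n - l)) by ring.
    rewrite Rabs_Ropp. auto. }
  exists (- M). intros n. specialize (HM n). lra.
Qed.

Lemma SP_plus {X : Type} (D1 D2 : X -> R) : SPr D1 -> SPr D2 -> SPr (fun x => D1 x + D2 x).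
Proof.
  assert (Hp : forall e n, psum (fun x => D1 x + D2 x) e n = psum D1 e n + psum D2 e n).
  { intros e n. unfold psum. apply sum_plus. }
  assert (Hinf : forall u v, (exists M, forall n, M <= u n) -> cv_infty v ->
            cv_infty (fun n => u n + v n)).
  { intros u v [m Hm] Hv M. destruct (Hv (M - m)) as [N HN]. exists N. intros n Hn.
    specialize (HN n Hn). specialize (Hm n). lra. }
  intros [[r1 [Hr1 H1]]|H1] [[r2 [Hr2 H2]]|H2].
  - left. exists (r1 + r2). split. lra. intros e He.
    apply (Un_cv_ext (fun n => psum D1 e n + psum D2 e n)). { intros; rewrite Hp; auto. }
    apply CV_plus; auto.
  - right. intros e He M. destruct (Hinf _ _ (cv_bounded_below _ _ (H1 e He)) (H2 e He) M)
      as [N HN]. exists N. intros n Hn. rewrite Hp. auto.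
  - right. intros e He M. destruct (Hinf _ _ (cv_bounded_below _ _ (H2 e He)) (H1 e He) M)
      as [N HN]. exists N. intros n Hn. rewrite Hp. specialize (HN n Hn). lra.
  - right. intros e He M. destruct (H1 e He (M/2)) as [N1 HN1].
    destruct (H2 e He (M/2)) as [N2 HN2]. exists (N1 + N2)%nat. intros n Hn.
    rewrite Hp. specialize (HN1 n ltac:(lia)). specialize (HN2 n ltac:(lia)). lra.
Qed.

Lemma SP_zero {X : Type} : SPr (fun _ : X => 0).
Proof.
  left. exists 0. split. lra. intros e He eps Heps. exists 0%nat. intros n Hn.
  unfold psum. rewrite sum_zero. unfold Rdist. rewrite Rminus_diag, Rabs_R0. lra.
Qed.

Lemma SP_perm {X : Type} (D : X -> R) (p : X -> X) : bijection p -> SPr D -> SPr (fun x => D (p x)).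
Proof.
  intros Hp [[r [Hr H]]|H].
  - left. exists r. split; auto. intros e He. apply (H (fun n => p (e n))).
    apply bij_comp; auto.
  - right. intros e He. apply (H (fun n => p (e n))). apply bij_comp; auto.
Qed.

Lemma SP_unperm {X : Type} (D : X -> R) (p : X -> X) : bijection p -> SPr (fun x => D (p x)) -> SPr D.
Proof.
  intros Hp H. destruct (bij_inv p Hp) as [g [Hg [H1 H2]]].
  apply (SP_perm _ g Hg) in H. revert H. apply SP_ext. intros; rewrite H2; auto.
Qed.

Lemma least_ge (P : nat -> Prop) m : (exists n, (m <= n)%nat /\ P n) ->
  exists n, (m <= n)%nat /\ P n /\ forall k, (m <= k)%nat -> P k -> (n <= k)%nat.
Proof.
  intros H. destruct (Wf_nat.dec_inh_nat_subset_has_unique_least_element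
     (fun n => (m <= n)%nat /\ P n)) as [n [[H1 H2] _]].
  - intros n. apply classic.
  - auto.
  - exists n. destruct H1. split; auto.
Qed.

Section Stream.
Variable P : nat -> Prop.
Hypothesis Hinf : forall m, exists n, (m <= n)%nat /\ P n.

Definition lg (m : nat) : nat := proj1_sig (constructive_indefinite_description _ (least_ge P m (Hinf m))).
Lemma lg_spec m : (m <= lg m)%nat /\ P (lg m) /\ forall k, (m <= k)%nat -> P k -> (lg m <= k)%nat.
Proof. unfold lg. destruct (constructive_indefinite_description _ _) as [n Hn]. simpl. auto. Qed.

Fixpoint strm (k : nat) : nat := match k with 0 => lg 0 | S k' => lg (S (strm k')) end.

Lemma strm_inc k : (strm k < strm (S k))%nat.
Proof. simpl. destruct (lg_spec (S (strm k))) as [H _]. lia. Qed.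
Lemma strm_P k : P (strm k).
Proof. destruct k; simpl; apply lg_spec. Qed.
Lemma strm_ge k : (k <= strm k)%nat.
Proof. induction k. lia. pose proof (strm_inc k). lia. Qed.
Lemma strm_mono k l : (k < l)%nat -> (strm k < strm l)%nat.
Proof. induction l; intros H. lia. pose proof (strm_inc l). destruct (Nat.eq_dec k l). subst; lia.
  specialize (IHl ltac:(lia)). lia. Qed.
Lemma strm_inj k l : strm k = strm l -> k = l.
Proof. intros H. destruct (Nat.lt_total k l) as [h|[h|h]]; auto;
  apply strm_mono in h; lia. Qed.
Lemma strm_surj n : P n -> exists k, strm k = n.
Proof.
  intros Hn. assert (forall k, (n <= strm k)%nat -> exists j, strm j = n).
  { induction k; intros Hk.
    - exists 0%nat. simpl in *. destruct (lg_spec 0) as [_ [_ H3]].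
      specialize (H3 n ltac:(lia) Hn). lia.
    - destruct (Compare_dec.le_lt_dec n (strm k)). auto.
      exists (S k). simpl in *. destruct (lg_spec (S (strm k))) as [_ [_ H3]].
      specialize (H3 n ltac:(lia) Hn). lia. }
  apply (H n). apply strm_ge.
Qed.
End Stream.

Lemma stream (P : nat -> Prop) : (forall m, exists n, (m <= n)%nat /\ P n) ->
  exists s : nat -> nat, (forall k l, (k < l)%nat -> (s k < s l)%nat) /\ (forall k, P (s k)) /\
    (forall n, P n -> exists k, s k = n) /\ (forall k, (k <= s k)%nat).
Proof.
  intros H. exists (strm P H). split; [|split; [|split]].
  apply strm_mono. apply strm_P. apply strm_surj. apply strm_ge.
Qed.

Section Machine.
Variable f : nat -> nat.
Hypothesis Hf : forall t, (1 <= f t)%nat.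

Fixpoint FF (i : nat) : nat := match i with 0 => 0%nat | S i' => (FF i' + f i')%nat end.
Fixpoint st (n : nat) : nat * nat :=
  match n with
  | 0 => (0%nat, 0%nat)
  | S m => let (i, j) := st m in if Nat.leb (FF i) j then (S i, j) else (i, S j)
  end.

Lemma FF_mono i k : (i <= k)%nat -> (FF i <= FF k)%nat.
Proof. induction k; intros H. replace i with 0%nat by lia. lia.
  destruct (Nat.eq_dec i (S k)). subst; lia. simpl. specialize (IHk ltac:(lia)). lia. Qed.
Lemma FF_smono i k : (i < k)%nat -> (FF i < FF k)%nat.
Proof. intros H. destruct k. lia. simpl. pose proof (FF_mono i k ltac:(lia)). pose proof (Hf k). lia. Qed.
Lemma FF_ge i : (i <= FF i)%nat.
Proof. induction i. simpl; lia. simpl. pose proof (Hf i). lia. Qed.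

Lemma st_inv n : (fst (st n) + snd (st n) = n)%nat /\ (snd (st n) <= FF (fst (st n)))%nat /\
  (fst (st n) = 0%nat \/ (FF (pred (fst (st n))) <= snd (st n))%nat).
Proof.
  induction n. simpl; lia. simpl. destruct (st n) as [i j]. simpl in *.
  destruct (Nat.leb (FF i) j) eqn:E; simpl.
  - apply Nat.leb_le in E. pose proof (Hf i). destruct IHn as [h1 [h2 h3]].
    split. lia. split. lia. right. simpl. lia.
  - apply Nat.leb_gt in E. destruct IHn as [h1 [h2 [h3|h3]]].
    split. lia. split. lia. left; lia.
    split. lia. split. lia. right; lia.
Qed.

Lemma st_adv k : forall n i j, st n = (i, j) -> (j + k <= FF i)%nat -> st (n + k) = (i, (j + k)%nat).
Proof.
  induction k; intros n i j H Hk. rewrite !Nat.add_0_r. auto.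
  assert (st (S n) = (i, S j)). { simpl. rewrite H. destruct (Nat.leb (FF i) j) eqn:E; auto.
    apply Nat.leb_le in E. lia. }
  replace (n + S k)%nat with (S n + k)%nat by lia. replace (j + S k)%nat with (S j + k)%nat by lia.
  apply IHk; auto. lia.
Qed.

Lemma st_Q i : st (i + FF i) = (i, FF i).
Proof.
  induction i. auto.
  assert (st (S (i + FF i)) = (S i, FF i)). { simpl. rewrite IHi. rewrite Nat.leb_refl. auto. }
  pose proof (st_adv (f i) _ _ _ H ltac:(simpl; lia)).
  replace (S i + FF (S i))%nat with (S (i + FF i) + f i)%nat by (simpl; lia). exact H0.
Qed.

Lemma st_B j : exists n i, st n = (i, j) /\ (j < FF i)%nat.
Proof.
  induction j.
  - exists 1%nat, 1%nat. split. auto. simpl. pose proof (Hf 0). lia.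
  - destruct IHj as [n [i [H1 H2]]].
    assert (H3 : st (S n) = (i, S j)). { simpl. rewrite H1. destruct (Nat.leb (FF i) j) eqn:E; auto.
      apply Nat.leb_le in E. lia. }
    destruct (Nat.eq_dec (S j) (FF i)).
    + exists (S (S n)), (S i). split. { remember (S n) as m. simpl. rewrite H3. rewrite e.
        rewrite Nat.leb_refl. auto. } simpl. pose proof (Hf i). lia.
    + exists (S n), i. split; auto. lia.
Qed.

Variables sQ sB : nat -> nat.
Hypothesis HQi : forall a b, sQ a = sQ b -> a = b.
Hypothesis HBi : forall a b, sB a = sB b -> a = b.
Hypothesis HQB : forall a b, sQ a <> sB b.
Hypothesis Hcov : forall m, (exists i, sQ i = m) \/ (exists j, sB j = m).

Definition sg (n : nat) : nat := let (i, j) := st n in if Nat.leb (FF i) j then sQ i else sB j.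

Lemma st_eq n m : st n = st m -> n = m.
Proof. intros H. pose proof (st_inv n) as [h _]. pose proof (st_inv m) as [h' _].
  rewrite H in h. lia. Qed.

Lemma sg_inj n m : sg n = sg m -> n = m.
Proof.
  unfold sg. intros H. apply st_eq. pose proof (st_inv n) as [_ [a2 a3]]. pose proof (st_inv m) as [_ [b2 b3]].
  destruct (st n) as [i j], (st m) as [i' j']. simpl in *.
  destruct (Nat.leb (FF i) j) eqn:E1, (Nat.leb (FF i') j') eqn:E2.
  - apply HQi in H. subst. apply Nat.leb_le in E1, E2. f_equal. lia.
  - exfalso; eapply HQB; eauto.
  - exfalso; eapply HQB; eauto.
  - apply HBi in H. subst. apply Nat.leb_gt in E1, E2. f_equal.
    destruct (Nat.lt_total i i') as [h|[h|h]]; auto; exfalso.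
    + destruct b3. lia. pose proof (FF_mono i (pred i') ltac:(lia)). lia.
    + destruct a3. lia. pose proof (FF_mono i' (pred i) ltac:(lia)). lia.
Qed.

Lemma sg_surj m : exists n, sg n = m.
Proof.
  destruct (Hcov m) as [[i Hi]|[j Hj]].
  - exists (i + FF i)%nat. unfold sg. rewrite st_Q, Nat.leb_refl. auto.
  - destruct (st_B j) as [n [i [H1 H2]]]. exists n. unfold sg. rewrite H1.
    destruct (Nat.leb (FF i) j) eqn:E; auto. apply Nat.leb_le in E. lia.
Qed.

Fixpoint lsn (g : nat -> R) (n : nat) : R := match n with 0 => 0 | S n' => lsn g n' + g n' end.

Lemma lsn_sum g n : sum_f_R0 g n = lsn g (S n).
Proof. induction n; simpl in *. ring. rewrite IHn. simpl. ring. Qed.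

Lemma lsn_sg (a : nat -> R) n :
  lsn (fun k => a (sg k)) n = lsn (fun t => a (sQ t)) (fst (st n)) + lsn (fun u => a (sB u)) (snd (st n)).
Proof.
  induction n. simpl. ring. simpl lsn at 1. rewrite IHn. unfold sg. simpl st.
  destruct (st n) as [i j]. simpl. destruct (Nat.leb (FF i) j); simpl; ring.
Qed.
End Machine.

Lemma mono_inj (s : nat -> nat) : (forall k l, (k < l)%nat -> (s k < s l)%nat) ->
  forall a b, s a = s b -> a = b.
Proof. intros H a b E. destruct (Nat.lt_total a b) as [h|[h|h]]; auto; apply H in h; lia. Qed.

Lemma key (a : nat -> R) eps : eps > 0 -> (forall m, exists n, (m <= n)%nat /\ a n < -eps) ->
  exists sgm : nat -> nat, bijection sgm /\
    forall i, exists n, (i <= n)%nat /\ sum_f_R0 (fun k => a (sgm k)) n <= - eps * INR i.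
Proof.
  intros Heps H.
  destruct (stream (fun n => a n < -eps) H) as [s [smono [sP [ssurj sge]]]].
  pose proof (mono_inj s smono) as sinj.
  set (P2 := fun n => exists k, n = s (2 * k)%nat).
  destruct (stream P2) as [sB [Bmono [BP [Bsurj _]]]].
  { intros m. exists (s (2 * m)%nat). split. pose proof (sge (2*m)%nat). lia. exists m; auto. }
  destruct (stream (fun n => ~ P2 n)) as [sQ [Qmono [QP [Qsurj _]]]].
  { intros m. exists (s (2 * m + 1)%nat). split. pose proof (sge (2*m+1)%nat). lia.
    intros [k Hk]. apply sinj in Hk. lia. }
  set (f := fun t => S (proj1_sig (constructive_indefinite_description _ (INR_unbounded (a (sQ t) / eps))))).
  assert (Hf : forall t, (1 <= f t)%nat). { intros t. unfold f. lia. }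
  assert (Hfb : forall t, a (sQ t) - eps * INR (f t) <= - eps).
  { intros t. unfold f. destruct (constructive_indefinite_description _ _) as [c Hc]. simpl proj1_sig.
    rewrite S_INR. apply (Rmult_gt_compat_l eps) in Hc; auto.
    replace (eps * (a (sQ t) / eps)) with (a (sQ t)) in Hc by (field; lra). lra. }
  assert (HQB : forall x y, sQ x <> sB y). { intros x y E. apply (QP x). rewrite E. apply BP. }
  assert (Hcov : forall m, (exists i, sQ i = m) \/ (exists j, sB j = m)).
  { intros m. destruct (classic (P2 m)). right; auto. left; auto. }
  exists (sg f sQ sB). split.
  { apply inj_surj_bij. apply sg_inj; auto; apply mono_inj; auto. apply sg_surj; auto. }
  assert (LB : forall J, lsn (fun u => a (sB u)) J <= - eps * INR J).
  { induction J. simpl. lra. simpl lsn. rewrite S_INR.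
    destruct (BP J) as [k Hk]. pose proof (sP (2*k)%nat) as H0. rewrite <- Hk in H0. lra. }
  assert (LQ : forall i, lsn (fun t => a (sQ t)) i - eps * INR (FF f i) <= - eps * INR i).
  { induction i. simpl. lra. simpl lsn. simpl FF. rewrite plus_INR, S_INR.
    specialize (Hfb i). lra. }
  intros i. exists (i + FF f (S i))%nat. split. lia.
  rewrite lsn_sum, <- Nat.add_succ_l.
  rewrite lsn_sg, st_Q. simpl fst. simpl snd.
  specialize (LB (FF f (S i))). specialize (LQ (S i)). rewrite S_INR in LQ. change (FF f (S i)) with (FF f i + f i)%nat in LB, LQ. lra.
Qed.

Lemma not_inf {X : Type} (A : X -> Prop) : ~ infinite_set A -> exists l : list X, forall x, A x -> In x l.
Proof. intros H. apply NNPP. exact H. Qed.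

Lemma SP_NegS {X : Type} (D : X -> R) : countably_infinite X -> SPr D -> NegS D.
Proof.
  intros [e He] H [d [Hd [B [HB HB2]]]].
  destruct He as [g [Hg1 Hg2]].
  assert (Hinf : forall m, exists n, (m <= n)%nat /\ D (e n) < - d).
  { apply NNPP. intros Hn. apply not_all_ex_not in Hn. destruct Hn as [m Hm].
    apply HB. exists (map e (seq 0 m)). intros x Hx. rewrite <- (Hg2 x). apply in_map.
    apply in_seq. split. lia. simpl. destruct (Compare_dec.le_lt_dec m (g x)); [|lia].
    exfalso. apply Hm. exists (g x). split; auto. rewrite Hg2. specialize (HB2 x Hx). lra. }
  destruct (key (fun n => D (e n)) d Hd Hinf) as [sgm [Hs Hk]].
  assert (He' : enumeration (fun k => e (sgm k))). { apply bij_comp; auto. exists g; auto. }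
  destruct H as [[r [Hr H]]|H].
  - specialize (H _ He'). destruct (cv_bounded_below _ _ H) as [M HM].
    destruct (INR_unbounded (- M / d)) as [i Hi].
    destruct (Hk i) as [n [_ Hn]]. specialize (HM n). unfold psum in HM.
    apply (Rmult_gt_compat_l d) in Hi; auto. replace (d * (- M / d)) with (- M) in Hi by (field; lra).
    lra.
  - destruct (H _ He' 0) as [N HN]. destruct (Hk N) as [n [Hn1 Hn2]].
    specialize (HN n Hn1). unfold psum in HN. pose proof (pos_INR N).
    assert (0 <= d * INR N) by (apply Rmult_le_pos; lra). lra.
Qed.

Lemma NegS_plus {X : Type} (D1 D2 : X -> R) : NegS D1 -> NegS D2 -> NegS (fun x => D1 x + D2 x).
Proof.
  intros N1 N2 [d [Hd [B [HB H]]]].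
  destruct (classic (infinite_set (fun x => B x /\ - D1 x > d / 2))) as [I1|I1].
  { apply N1. exists (d/2). split. lra. eexists; split; [exact I1|]. intros x [_ Hx]; auto. }
  destruct (classic (infinite_set (fun x => B x /\ - D2 x > d / 2))) as [I2|I2].
  { apply N2. exists (d/2). split. lra. eexists; split; [exact I2|]. intros x [_ Hx]; auto. }
  apply not_inf in I1 as [l1 H1]. apply not_inf in I2 as [l2 H2].
  apply HB. exists (l1 ++ l2). intros x Hx. apply in_or_app. specialize (H x Hx).
  destruct (Rlt_le_dec (d/2) (- D1 x)). left; apply H1; auto. right; apply H2. split; auto. lra.
Qed.

Lemma PosC_plus {X : Type} (D1 D2 : X -> R) : PosC D2 -> NegS D1 -> PosC (fun x => D1 x + D2 x).
Proof.
  intros [c [Hc [A [HA H]]]] N1.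
  destruct (classic (infinite_set (fun x => - D1 x > c / 2))) as [I1|I1].
  { exfalso. apply N1. exists (c/2). split. lra. eexists; split; [exact I1|]. auto. }
  apply not_inf in I1 as [l1 H1].
  exists (c/2). split. lra. exists (fun x => A x /\ ~ In x l1). split.
  - intros [l Hl]. apply HA. exists (l ++ l1). intros x Hx. apply in_or_app.
    destruct (classic (In x l1)). right; auto. left; apply Hl; auto.
  - intros x [Hx Hn]. specialize (H x Hx). destruct (Rlt_le_dec (c/2) (- D1 x)).
    exfalso; apply Hn, H1; auto. lra.
Qed.

Lemma PosC_plus' {X : Type} (D1 D2 : X -> R) : PosC D1 -> NegS D2 -> PosC (fun x => D1 x + D2 x).
Proof.
  intros P N. destruct (PosC_plus D2 D1 P N) as [c [Hc [A [HA H]]]].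
  exists c. split; auto. exists A. split; auto. intros x Hx. specialize (H x Hx). lra.
Qed.

Lemma bt_trans {X : Type} (D1 D2 : X -> R) : countably_infinite X ->
  bt D1 -> bt D2 -> bt (fun x => D1 x + D2 x).
Proof.
  intros HX B1 B2.
  assert (N1 : NegS D1). { destruct B1 as [S|[_ [_ N]]]; auto. apply SP_NegS; auto. }
  assert (N2 : NegS D2). { destruct B2 as [S|[_ [_ N]]]; auto. apply SP_NegS; auto. }
  destruct B1 as [S1|[_ [P1 _]]]; destruct B2 as [S2|[_ [P2 _]]].
  - left. apply SP_plus; auto.
  - destruct (classic (SPr (fun x => D1 x + D2 x))). left; auto. right. split; auto.
    split. apply PosC_plus; auto. apply NegS_plus; auto.
  - destruct (classic (SPr (fun x => D1 x + D2 x))). left; auto. right. split; auto.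
    split. apply PosC_plus'; auto. apply NegS_plus; auto.
  - destruct (classic (SPr (fun x => D1 x + D2 x))). left; auto. right. split; auto.
    split. apply PosC_plus; auto. apply NegS_plus; auto.
Qed.

Fixpoint lsum (b : nat -> R) (l : list nat) : R :=
  match l with nil => 0 | x :: l' => b x + lsum b l' end.

Lemma lsum_app b l1 l2 : lsum b (l1 ++ l2) = lsum b l1 + lsum b l2.
Proof. induction l1; simpl. ring. rewrite IHl1. ring. Qed.

Lemma lsum_map b (h : nat -> nat) l : lsum b (map h l) = lsum (fun k => b (h k)) l.
Proof. induction l; simpl; auto. rewrite IHl; auto. Qed.

Lemma sum_lsum h n : sum_f_R0 h n = lsum h (seq 0 (S n)).
Proof. induction n. simpl. ring. rewrite seq_S, lsum_app, <- IHn. simpl. ring. Qed.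

Lemma lsum_nonneg b l : (forall j, 0 <= b j) -> 0 <= lsum b l.
Proof. intros H. induction l; simpl. lra. specialize (H a). lra. Qed.

Lemma lsum_incl b l : forall l', (forall j, 0 <= b j) -> NoDup l -> incl l l' -> lsum b l <= lsum b l'.
Proof.
  induction l; intros l' Hb Hn Hi. simpl. apply lsum_nonneg; auto.
  destruct (in_split a l') as [l1 [l2 E]]. { apply Hi; left; auto. }
  apply NoDup_cons_iff in Hn as [Ha Hn]. subst l'.
  rewrite lsum_app. simpl.
  assert (lsum b l <= lsum b (l1 ++ l2)).
  { apply IHl; auto. intros x Hx. assert (In x (l1 ++ a :: l2)) by (apply Hi; right; auto).
    apply in_app_or in H. apply in_or_app. destruct H as [H|[H|H]]; auto. subst; contradiction. }
  rewrite lsum_app in H. lra.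
Qed.

Lemma list_bound (l : list nat) : exists N, forall x, In x l -> (x <= N)%nat.
Proof. induction l. exists 0%nat; intros x []. destruct IHl as [N HN]. exists (Nat.max a N).
  intros x [Hx|Hx]. subst; lia. specialize (HN x Hx). lia. Qed.

Lemma cmp {X : Type} (D : X -> R) e1 e2 : (forall x, 0 <= D x) -> enumeration e1 -> enumeration e2 ->
  forall n, exists N, psum D e1 n <= psum D e2 N.
Proof.
  intros HD [g1 [A1 A2]] [g2 [B1 B2]] n.
  set (l := map (fun k => g2 (e1 k)) (seq 0 (S n))).
  destruct (list_bound l) as [N HN]. exists N. unfold psum. rewrite !sum_lsum.
  replace (lsum (fun k => D (e1 k)) (seq 0 (S n))) with (lsum (fun j => D (e2 j)) l).
  2:{ unfold l. rewrite lsum_map. f_equal. apply functional_extensionality. intros k. rewrite B2; auto. }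
  apply lsum_incl. intros; auto. 
  - unfold l. apply NoDup_map_NoDup_ForallPairs. 2: apply seq_NoDup.
    intros x y _ _ E. apply (f_equal e2) in E. rewrite !B2 in E. apply (f_equal g1) in E. rewrite !A1 in E. auto.
  - intros x Hx. apply in_seq. specialize (HN x Hx). lia.
Qed.

Lemma lim_le_ev u l M N : Un_cv u l -> (forall n, (N <= n)%nat -> u n <= M) -> l <= M.
Proof.
  intros H Hb. apply Rnot_lt_le. intros Hl. destruct (H (l - M) ltac:(lra)) as [N' HN'].
  specialize (HN' (N + N')%nat ltac:(lia)). specialize (Hb (N + N')%nat ltac:(lia)).
  unfold Rdist in HN'. apply Rabs_def2 in HN'. lra.
Qed.

Lemma grow_mono u : Un_growing u -> forall n m, (n <= m)%nat -> u n <= u m.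
Proof. intros H n m Hnm. induction m. replace n with 0%nat by lia. lra.
  destruct (Nat.eq_dec n (S m)). subst; lra. specialize (IHm ltac:(lia)). specialize (H m). lra. Qed.

Lemma psum_grow {X : Type} (D : X -> R) e : (forall x, 0 <= D x) -> Un_growing (psum D e).
Proof. intros H n. unfold psum. simpl. specialize (H (e (S n))). lra. Qed.

Lemma SP_nonneg {X : Type} (D : X -> R) : countably_infinite X -> (forall x, 0 <= D x) -> SPr D.
Proof.
  intros [e He] HD. destruct (classic (has_ub (psum D e))) as [Hb|Hb].
  - destruct (growing_cv _ (psum_grow D e HD) Hb) as [r Hr]. left. exists r. split.
    { pose proof (growing_ineq _ _ (psum_grow D e HD) Hr 0%nat). unfold psum in H. simpl in H.
      specialize (HD (e 0%nat)). lra. }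
    intros e' He'.
    assert (Hb' : forall n, psum D e' n <= r).
    { intros n. destruct (cmp D e' e HD He' He n) as [N HN].
      pose proof (growing_ineq _ _ (psum_grow D e HD) Hr N). lra. }
    destruct (growing_cv (psum D e') (psum_grow D e' HD)) as [r' Hr'].
    { exists r. intros x [i ->]. auto. }
    replace r with r'; auto. apply Rle_antisym.
    + apply (lim_le_ev _ _ _ 0 Hr'). intros; auto.
    + apply (lim_le_ev _ _ _ 0 Hr). intros n _. destruct (cmp D e e' HD He He' n) as [N HN].
      pose proof (growing_ineq _ _ (psum_grow D e' HD) Hr' N). lra.
  - right. intros e' He' M.
    assert (exists N, M < psum D e' N) as [N HN].
    { apply NNPP. intros Hn. apply Hb. exists M. intros x [i ->].
      destruct (cmp D e e' HD He He' i) as [N HN]. apply Rnot_lt_le. intros Hc.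
      apply Hn. exists N. lra. }
    exists N. intros n Hn. pose proof (grow_mono _ (psum_grow D e' HD) N n Hn). lra.
Qed.

Lemma sum_nonpos (h : nat -> R) : (forall k, h k <= 0) -> forall n,
  sum_f_R0 h n <= 0 /\ forall j, (j <= n)%nat -> sum_f_R0 h n <= h j.
Proof.
  intros H n. induction n; simpl.
  - split. apply H. intros j Hj. replace j with 0%nat by lia. lra.
  - destruct IHn as [I1 I2]. pose proof (H (S n)). split. lra.
    intros j Hj. destruct (Nat.eq_dec j (S n)). subst; lra. specialize (I2 j ltac:(lia)). lra.
Qed.

Lemma not_bt_nonpos {X : Type} (D : X -> R) x0 : countably_infinite X ->
  (forall x, D x <= 0) -> D x0 < 0 -> ~ bt D.
Proof.
  intros [e He] HD H0 [S|[_ [P _]]].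
  - destruct He as [g [G1 G2]].
    assert (Hs := sum_nonpos (fun k => D (e k)) (fun k => HD (e k))).
    destruct S as [[r [Hr S]]|S].
    + specialize (S e (ex_intro _ g (conj G1 G2))).
      assert (r <= D x0). { apply (lim_le_ev _ _ _ (g x0) S). intros n Hn.
        destruct (Hs n) as [_ Hj]. specialize (Hj (g x0) Hn). rewrite G2 in Hj. auto. }
      lra.
    + destruct (S e (ex_intro _ g (conj G1 G2)) 0) as [N HN]. specialize (HN N (le_n N)).
      destruct (Hs N). unfold psum in HN. lra.
  - destruct P as [c [Hc [A [HA H]]]]. apply HA. exists nil. intros x Hx.
    specialize (H x Hx). specialize (HD x). lra.
Qed.

Lemma bt_perm {X : Type} (D : X -> R) (p : X -> X) : bijection p -> bt D -> bt (fun x => D (p x)).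
Proof.
  intros Hp [S|[NS [P N]]].
  - left. apply SP_perm; auto.
  - right. split; [|split].
    + intros H. apply NS. eapply SP_unperm; eauto.
    + destruct P as [c [Hc [A [HA H]]]]. exists c. split; auto. exists (fun x => A (p x)).
      split. apply inf_pre; auto. intros x Hx; auto.
    + intros [d [Hd [B [HB H]]]]. apply N. destruct (bij_inv p Hp) as [g [Hg [G1 G2]]].
      exists d. split; auto. exists (fun x => B (g x)). split. apply inf_pre; auto.
      intros x Hx. specialize (H _ Hx). rewrite G2 in H. auto.
Qed.

Lemma bt_scal {X : Type} (D : X -> R) c : c > 0 -> bt D -> bt (fun x => c * D x).
Proof.
  intros Hc [S|[NS [P N]]].
  - left. apply SP_scal; auto.
  - right. split; [|split].
    + intros H. apply NS. eapply SP_unscal; eauto.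
    + destruct P as [a [Ha [A [HA H]]]]. exists (c * a). split. apply Rmult_lt_0_compat; lra.
      exists A. split; auto. intros x Hx. specialize (H x Hx).
      apply Rmult_lt_compat_l; auto.
    + intros [d [Hd [B [HB H]]]]. apply N. exists (d / c). split.
      apply Rlt_gt, Rdiv_lt_0_compat; lra. exists B. split; auto. intros x Hx.
      specialize (H x Hx). apply (Rmult_lt_reg_l c). lra.
      replace (c * (d / c)) with d by (field; lra). lra.
Qed.

Fixpoint blk (n : nat) : nat * nat :=
  match n with
  | 0 => (1%nat, 0%nat)
  | S m => let (k, j) := blk m in if Nat.ltb j k then (k, S j) else (S k, 0%nat)
  end.
Definition blkA (n : nat) : R := let (k, j) := blk n in if Nat.eqb j 0 then 1 else - / INR k.

Lemma blk_inv n : (1 <= fst (blk n))%nat /\ (snd (blk n) <= fst (blk n))%nat /\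
  (n + (fst (blk n) - snd (blk n)) <= fst (blk n) * fst (blk n))%nat.
Proof.
  induction n. simpl; lia. simpl. destruct (blk n) as [k j]. simpl in *.
  destruct (Nat.ltb j k) eqn:E; simpl.
  - apply Nat.ltb_lt in E. lia.
  - apply Nat.ltb_ge in E. nia.
Qed.

Lemma blk_sum n : sum_f_R0 blkA n = 1 - INR (snd (blk n)) / INR (fst (blk n)).
Proof.
  induction n. simpl. unfold blkA. simpl. field.
  simpl sum_f_R0. rewrite IHn. pose proof (blk_inv n) as [h1 [h2 _]]. unfold blkA. simpl blk.
  destruct (blk n) as [k j]. simpl in *. assert (INR k > 0) by (apply lt_0_INR; lia).
  destruct (Nat.ltb j k) eqn:E; cbn [fst snd Nat.eqb].
  - rewrite S_INR. field. lra.
  - apply Nat.ltb_ge in E. replace j with k by lia. rewrite S_INR. change (INR 0) with 0.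
    field. split; lra.
Qed.

Lemma blk_sum_bd n : 0 <= sum_f_R0 blkA n <= 1.
Proof.
  rewrite blk_sum. pose proof (blk_inv n) as [h1 [h2 _]]. destruct (blk n) as [k j]. simpl in *.
  assert (INR k > 0) by (apply lt_0_INR; lia). apply le_INR in h2.
  pose proof (pos_INR j). split.
  - apply Rge_le, Rge_minus, Rle_ge. apply (Rmult_le_reg_r (INR k)); auto.
    unfold Rdiv. rewrite Rmult_assoc, Rinv_l; lra.
  - assert (0 <= INR j / INR k) by (unfold Rdiv; apply Rmult_le_pos; [lra| apply Rlt_le, Rinv_0_lt_compat; lra]). lra.
Qed.

Lemma blk_adv t : forall n k j, blk n = (k, j) -> (j + t = k)%nat -> blk (n + S t) = (S k, 0%nat).
Proof.
  induction t; intros n k j H E.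
  - replace (n + 1)%nat with (S n) by lia. simpl. rewrite H.
    destruct (Nat.ltb j k) eqn:E'; auto. apply Nat.ltb_lt in E'. lia.
  - assert (blk (S n) = (k, S j)). { simpl. rewrite H. destruct (Nat.ltb j k) eqn:E'; auto.
      apply Nat.ltb_ge in E'. lia. }
    replace (n + S (S t))%nat with (S n + S t)%nat by lia. apply (IHt _ _ _ H0). lia.
Qed.

Lemma blk_one m : exists n, (m <= n)%nat /\ blkA n = 1.
Proof.
  pose proof (blk_inv m) as [_ [h _]]. destruct (blk m) as [k j] eqn:E. simpl in h.
  exists (m + S (k - j))%nat. split. lia. unfold blkA.
  rewrite (blk_adv (k - j) m k j E ltac:(lia)). auto.
Qed.

Lemma blk_neg n d : d > 0 -> - blkA n > d -> INR (fst (blk n)) < / d.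
Proof.
  intros Hd H. pose proof (blk_inv n) as [h1 _]. unfold blkA in H. destruct (blk n) as [k j].
  simpl in *. assert (INR k > 0) by (apply lt_0_INR; lia).
  destruct (Nat.eqb j 0). lra. rewrite Ropp_involutive in H.
  apply (Rmult_lt_compat_l (INR k)) in H; auto. rewrite Rinv_r in H by lra.
  apply (Rmult_lt_reg_l d). auto. rewrite Rinv_r by lra. lra.
Qed.

Lemma example {X : Type} : countably_infinite X -> exists E : X -> R, bt E /\ ~ SPr E.
Proof.
  intros [e He]. destruct He as [g [G1 G2]].
  assert (He : enumeration e) by (exists g; auto).
  exists (fun x => blkA (g x)).
  assert (Hps : forall n, psum (fun x => blkA (g x)) e n = sum_f_R0 blkA n).
  { intros n. unfold psum. apply sum_eq. intros i _. rewrite G1. auto. }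
  assert (NS : ~ SPr (fun x => blkA (g x))).
  { intros [[r [Hr S]]|S].
    - specialize (S e He (1/2) ltac:(lra)). destruct S as [N HN].
      destruct (blk_one (S N)) as [n [Hn H1]]. destruct n. lia.
      pose proof (HN (S n) ltac:(lia)) as A1. pose proof (HN n ltac:(lia)) as A2.
      rewrite Hps in A1, A2. simpl sum_f_R0 in A1. rewrite H1 in A1. unfold Rdist in *.
      apply Rabs_def2 in A1. apply Rabs_def2 in A2. lra.
    - destruct (S e He 1) as [N HN]. specialize (HN N (le_n N)). rewrite Hps in HN.
      pose proof (blk_sum_bd N). lra. }
  split; auto. right. split; auto. split.
  - exists (1/2). split. lra. exists (fun x => blkA (g x) > 1/2). split; [|auto].
    intros [l Hl]. destruct (list_bound (map g l)) as [M HM].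
    destruct (blk_one (S M)) as [n [Hn H1]].
    assert (In (e n) l). { apply Hl. rewrite G1, H1. lra. }
    apply (in_map g) in H. rewrite G1 in H. specialize (HM n H). lia.
  - intros [d [Hd [B [HB H]]]]. apply HB. destruct (INR_unbounded (/ d)) as [K HK].
    exists (map e (seq 0 (S (K * K)))). intros x Hx. rewrite <- (G2 x). apply in_map.
    apply in_seq. specialize (H x Hx). apply blk_neg in H; auto.
    pose proof (blk_inv (g x)) as [_ [_ h]]. assert (INR (fst (blk (g x))) < INR K) by lra.
    apply INR_lt in H0. nia.
Qed.

Theorem proposition3 (X : Type) (HX : countably_infinite X) :
  (is_preorder (@btri X) /\ strong_pareto (@btri X) /\
   permutation_invariance (@btri X) /\ quasi_independence (@btri X)) /\
  (weakly_extends (@btri X) (@sum_preorder X) /\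
   exists w v : world X, btri w v /\ ~ sum_preorder w v).
Proof.
  split; [split; [|split; [|split]]|split].
  - split.
    + intros w. apply btri_bt. left. apply (SP_ext (fun _ => 0)). intros; ring. apply SP_zero.
    + intros w v u H1 H2. apply btri_bt in H1, H2. apply btri_bt.
      pose proof (bt_trans _ _ HX H1 H2) as H.
      replace (fun x => w x - u x) with (fun x => (w x - v x) + (v x - u x)); auto.
      apply functional_extensionality; intros; ring.
  - intros w v Hge [x0 Hx0]. split.
    + apply btri_bt. left. apply SP_nonneg; auto. intros x. specialize (Hge x). lra.
    + intros H. apply btri_bt in H. revert H. apply (not_bt_nonpos _ x0 HX).
      intros x. specialize (Hge x). lra. lra.
  - intros w v p Hp. split; intros H.
    + apply btri_bt in H. apply btri_bt. exact (bt_perm (fun x => w x - v x) p Hp H).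
    + apply btri_bt in H. apply btri_bt. destruct (bij_inv p Hp) as [g [Hg [G1 G2]]].
      pose proof (bt_perm _ g Hg H) as H'. unfold permute in H'.
      replace (fun x => w x - v x) with (fun x => w (p (g x)) - v (p (g x))); auto.
      apply functional_extensionality; intros; rewrite G2; auto.
  - intros w v u H alpha Ha. apply btri_bt in H. apply btri_bt.
    replace (fun x => mix alpha w u x - mix alpha v u x) with (fun x => alpha * (w x - v x)).
    2:{ apply functional_extensionality; intros; unfold mix; ring. }
    destruct (Rle_lt_or_eq_dec 0 alpha (proj1 Ha)) as [Hp|Hz].
    + apply bt_scal; auto.
    + subst alpha. left. apply (SP_ext (fun _ => 0)). intros; ring. apply SP_zero.
  - intros w v H. apply btri_bt. left. exact H.
  - destruct (example HX) as [E [H1 H2]]. exists E, (fun _ => 0).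
    assert (EE : (fun x => E x - 0) = E). { apply functional_extensionality; intros; ring. }
    split.
    + apply btri_bt. rewrite EE. auto.
    + unfold sum_preorder. change (~ SPr (fun x => E x - 0)). rewrite EE. auto.
Qed.
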